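(* Let $M_\sharp\in\mathbb{R}^{d_1\times d_2}$ have rank $r$ with compact SVD $M_\sharp=U\Lambda V^\top$, and set $X_\sharp=U\sqrt\Lambda$, $Y_\sharp=\sqrt\Lambda V^\top$. Let $\mathcal{A}\colon\mathbb{R}^{d_1\times d_2}\to\mathbb{R}^m$ be linear and $b\in\mathbb{R}^m$, and suppose there exist $\mathcal{I}\subset\{1,\dots,m\}$ and $\kappa_3>0$ with (i) $b_i=\mathcal{A}(M_\sharp)_i$ for all $i\notin\mathcal{I}$, and (ii) $\kappa_3\|W\|_F\le\frac1m\|\mathcal{A}_{\mathcal{I}^c}(W)\|_1-\frac1m\|\mathcal{A}_{\mathcal{I}}(W)\|_1$ for every $W$ of rank at most $2r$. Let $f(X,Y)=\frac1m\|\mathcal{A}(XY)-b\|_1$. Fix $\nu>0$. Then for all $X\in\mathbb{R}^{d_1\times r}$, $Y\in\mathbb{R}^{r\times d_2}$ with $$\max\{\|X-X_\sharp\|_F,\|Y-Y_\sharp\|_F\}\le\nu\sqrt{\sigma_r(M_\sharp)},\qquad\mathrm{dist}\big((X,Y),\mathcal{D}^*(M_\sharp)\big)\le\frac{\sqrt{\sigma_r(M_\sharp)}}{1+2(1+\sqrt2)\nu},$$ we have $$f(X,Y)-f(X_\sharp,Y_\sharp)\ge\frac{\kappa_3\sqrt{\sigma_r(M_\sharp)}}{2+4(1+\sqrt2)\nu}\,\mathrm{dist}\big((X,Y),\mathcal{D}^*(M_\sharp)\big).$$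
   Context: For $\mathcal{J}\subset\{1,\dots,m\}$, $\mathcal{A}_{\mathcal{J}}(W)=(\mathcal{A}(W)_i)_{i\in\mathcal{J}}$. $\mathcal{D}^*(M_\sharp)=\{(X_\sharp A,A^{-1}Y_\sharp):A\in GL(r)\}$ and $\mathrm{dist}((X,Y),\mathcal{D}^*(M_\sharp))=\inf_{A\in GL(r)}\sqrt{\|X-X_\sharp A\|_F^2+\|Y-A^{-1}Y_\sharp\|_F^2}$. $\sigma_r$ is the $r$-th largest singular value. *)

(* Defs.v *)
(* matrices over an arbitrary real closed field R
   (needed for Num.sqrt); the paper's setting is R = the reals. *)
From HB Require Import structures.
From mathcomp Require Import all_boot all_order all_algebra.
Set Implicit Arguments. Unset Strict Implicit. Unset Printing Implicit Defensive.
Import Order.TTheory GRing.Theory Num.Theory.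
Local Open Scope ring_scope.

Definition frob (R : rcfType) (p q : nat) (W : 'M[R]_(p, q)) : R :=
  Num.sqrt (\sum_(i < p) \sum_(j < q) W i j ^+ 2).

Definition l1_on (R : rcfType) (m : nat) (J : {set 'I_m}) (v : 'cV[R]_m) : R :=
  \sum_(i in J) `|v i 0|.

Definition l1 (R : rcfType) (m : nat) (v : 'cV[R]_m) : R :=
  \sum_(i < m) `|v i 0|.

Definition lossf (R : rcfType) (d1 d2 r m : nat)
  (A : {linear 'M[R]_(d1, d2) -> 'cV[R]_m}) (b : 'cV[R]_m)
  (X : 'M[R]_(d1, r)) (Y : 'M[R]_(r, d2)) : R :=
  m%:R^-1 * l1 (A (X *m Y) - b).

(* the quantity whose infimum over A in GL(r) defines dist((X,Y), D^*(M#)) *)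
Definition dist_val (R : rcfType) (d1 d2 r : nat)
  (Xs X : 'M[R]_(d1, r)) (Ys Y : 'M[R]_(r, d2)) (G : 'M[R]_r) : R :=
  Num.sqrt (frob (X - Xs *m G) ^+ 2 + frob (Y - invmx G *m Ys) ^+ 2).

(* d = dist((X,Y), D^*(M#)) = inf_{G in GL(r)} dist_val G, stated as
   "d is the greatest lower bound" (R need not be complete in general). *)
Definition is_dist (R : rcfType) (d1 d2 r : nat)
  (Xs X : 'M[R]_(d1, r)) (Ys Y : 'M[R]_(r, d2)) (d : R) : Prop :=
  (forall G : 'M[R]_r, G \in unitmx -> d <= dist_val Xs X Ys Y G) /\
  (forall e : R, (forall G : 'M[R]_r, G \in unitmx -> e <= dist_val Xs X Ys Y G) ->
     e <= d).

(* the r-th (last) entry of a row vector of length r, i.e. the r-th largest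
   singular value when s is the nonincreasing diagonal of Lambda *)
Definition last_entry (R : rcfType) (r : nat) (s : 'rV[R]_r) : R :=
  nth 0 [seq s 0 i | i <- enum 'I_r] r.-1.

(* Main.v *)
Require Import Defs.
From HB Require Import structures.
From mathcomp Require Import all_boot all_order all_algebra.
Import Order.TTheory GRing.Theory Num.Theory.
Local Open Scope ring_scope.
From mathcomp Require Import ring lra.
From Stdlib Require Import Classical.

Section Norms.
Set Implicit Arguments. Unset Strict Implicit.
Variable R : rcfType.

Definition n2 (p q : nat) (W : 'M[R]_(p, q)) : R := \sum_(i < p) \sum_(j < q) W i j ^+ 2.
Definition ip (p q : nat) (A B : 'M[R]_(p, q)) : R := \tr (A^T *m B).

Lemma frobE p q (W : 'M[R]_(p,q)) : frob W = Num.sqrt (n2 W).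
Proof. by []. Qed.

Lemma n2_ge0 p q (W : 'M[R]_(p,q)) : 0 <= n2 W.
Proof. by apply: sumr_ge0 => i _; apply: sumr_ge0 => j _; exact: sqr_ge0. Qed.

Lemma n2_ip p q (W : 'M[R]_(p,q)) : n2 W = ip W W.
Proof.
rewrite /n2 /ip /mxtrace exchange_big; apply: eq_bigr => j _; rewrite mxE.
by apply: eq_bigr => i _; rewrite !mxE expr2.
Qed.

Lemma ipC p q (A B : 'M[R]_(p,q)) : ip A B = ip B A.
Proof. by rewrite /ip -mxtrace_tr trmx_mul trmxK. Qed.

Lemma ipDr p q (A B C : 'M[R]_(p,q)) : ip A (B + C) = ip A B + ip A C.
Proof. by rewrite /ip mulmxDr mxtraceD. Qed.

Lemma ipZr p q a (A B : 'M[R]_(p,q)) : ip A (a *: B) = a * ip A B.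
Proof. by rewrite /ip -scalemxAr mxtraceZ. Qed.

Lemma ipNr p q (A B : 'M[R]_(p,q)) : ip A (- B) = - ip A B.
Proof. by rewrite /ip mulmxN raddfN. Qed.

Lemma ipDl p q (A B C : 'M[R]_(p,q)) : ip (B + C) A = ip B A + ip C A.
Proof. by rewrite ipC ipDr !(ipC A). Qed.
Lemma ipZl p q a (A B : 'M[R]_(p,q)) : ip (a *: B) A = a * ip B A.
Proof. by rewrite ipC ipZr ipC. Qed.
Lemma ipNl p q (A B : 'M[R]_(p,q)) : ip (- B) A = - ip B A.
Proof. by rewrite ipC ipNr ipC. Qed.

Lemma n2D p q (A B : 'M[R]_(p,q)) : n2 (A + B) = n2 A + n2 B + 2 * ip A B.
Proof. rewrite !n2_ip ipDl !ipDr (ipC B A); ring. Qed.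

Lemma n2Z p q a (A : 'M[R]_(p,q)) : n2 (a *: A) = a ^+ 2 * n2 A.
Proof. rewrite !n2_ip ipZl ipZr; ring. Qed.

Lemma n2N p q (A : 'M[R]_(p,q)) : n2 (- A) = n2 A.
Proof. rewrite !n2_ip ipNl ipNr; ring. Qed.

Lemma CS p q (A B : 'M[R]_(p,q)) : ip A B ^+ 2 <= n2 A * n2 B.
Proof.
have h1 := n2_ge0 (n2 A *: B - ip A B *: A).
have h2 := n2_ge0 (n2 B *: A - ip A B *: B).
have h3 := n2_ge0 (A - B).
have h4 := n2_ge0 (A + B).
move: h1 h2 h3 h4; rewrite !n2D !n2N !n2Z !ipNr !ipZr !ipZl (ipC B A) (n2_ip A) (n2_ip B).
set a := ip A A; set b := ip B B; set c := ip A B.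
move=> h1 h2 h3 h4.
have ha : 0 <= a by rewrite /a -n2_ip n2_ge0.
have hb : 0 <= b by rewrite /b -n2_ip n2_ge0.
have e1 : 0 <= a * (a * b - c ^+ 2) by nra.
have e2 : 0 <= b * (a * b - c ^+ 2) by nra.
have [a0|apos] := eqVneq a 0.
  have [b0|bpos] := eqVneq b 0.
    rewrite a0 b0 in h3 h4 *; nra.
  have bp : 0 < b by rewrite lt0r bpos.
  by rewrite a0 in e2 *; nra.
have ap : 0 < a by rewrite lt0r apos.
nra.
Qed.


Lemma sqrt_le_of (p t : R) : 0 <= t -> p <= t ^+ 2 -> Num.sqrt p <= t.
Proof.
move=> t0 h; rewrite -(ger0_norm t0) -sqrtr_sqr; exact: ler_wsqrtr.
Qed.

Lemma frob_ge0 p q (W : 'M[R]_(p,q)) : 0 <= frob W.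
Proof. exact: sqrtr_ge0. Qed.

Lemma frob2 p q (W : 'M[R]_(p,q)) : frob W ^+ 2 = n2 W.
Proof. by rewrite frobE sqr_sqrtr // n2_ge0. Qed.

Lemma ip_le p q (A B : 'M[R]_(p,q)) : ip A B <= frob A * frob B.
Proof.
have := CS A B; rewrite -!frob2 -exprMn => h.
have h0 : 0 <= frob A * frob B by rewrite mulr_ge0 ?frob_ge0.
apply: le_trans (ler_norm _) _.
rewrite -sqrtr_sqr; apply: sqrt_le_of => //.
Qed.

Lemma frobD p q (A B : 'M[R]_(p,q)) : frob (A + B) <= frob A + frob B.
Proof.
rewrite {1}frobE; apply: sqrt_le_of; first by rewrite addr_ge0 ?frob_ge0.
rewrite n2D -!frob2; have := ip_le A B; rewrite sqrrD; lra.
Qed.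

Lemma frobN p q (A : 'M[R]_(p,q)) : frob (- A) = frob A.
Proof. by rewrite !frobE n2N. Qed.

Lemma frobB p q (A B : 'M[R]_(p,q)) : frob (A - B) <= frob A + frob B.
Proof. by rewrite -(frobN B) frobD. Qed.

Lemma frob_rev p q (A B : 'M[R]_(p,q)) : frob A - frob B <= frob (A + B).
Proof.
have := frobD (A + B) (- B); rewrite addrK frobN; lra.
Qed.

Lemma frobZ p q a (A : 'M[R]_(p,q)) : frob (a *: A) = `|a| * frob A.
Proof. by rewrite !frobE n2Z sqrtrM ?sqr_ge0 // sqrtr_sqr. Qed.

Lemma sum_CS n (a b : 'I_n -> R) :
  (\sum_k a k * b k) ^+ 2 <= (\sum_k a k ^+ 2) * (\sum_k b k ^+ 2).
Proof.
have := CS (\row_k a k) (\row_k b k).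
have -> : ip (\row_k a k) (\row_k b k) = \sum_k a k * b k.
  rewrite /ip /mxtrace; apply: eq_bigr => k _; rewrite !mxE big_ord1 !mxE //.
have e : forall c : 'I_n -> R, n2 (\row_k c k) = \sum_k c k ^+ 2.
  by move=> c; rewrite /n2 big_ord1; apply: eq_bigr => k _; rewrite mxE.
by rewrite !e.
Qed.

Lemma n2M p q t (A : 'M[R]_(p,q)) (B : 'M[R]_(q,t)) : n2 (A *m B) <= n2 A * n2 B.
Proof.
rewrite /n2 mulr_suml; apply: ler_sum => i _.
rewrite [X in _ * X]exchange_big /= mulr_sumr; apply: ler_sum => j _.
rewrite mxE; exact: sum_CS.
Qed.

Lemma frobM p q t (A : 'M[R]_(p,q)) (B : 'M[R]_(q,t)) : frob (A *m B) <= frob A * frob B.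
Proof.
rewrite -sqrtrM ?n2_ge0 //; apply: ler_wsqrtr; exact: n2M.
Qed.

Lemma n2_tr p q (A : 'M[R]_(p,q)) : n2 A^T = n2 A.
Proof. by rewrite /n2 exchange_big; apply: eq_bigr => i _; apply: eq_bigr => j _; rewrite mxE. Qed.

Lemma frob_tr p q (A : 'M[R]_(p,q)) : frob A^T = frob A.
Proof. by rewrite !frobE n2_tr. Qed.

Lemma n2_orth d r (U : 'M[R]_(d,r)) n (Z : 'M[R]_(r,n)) : U^T *m U = 1%:M -> n2 (U *m Z) = n2 Z.
Proof. by move=> hU; rewrite !n2_ip /ip trmx_mul -mulmxA (mulmxA U^T) hU mul1mx. Qed.

Lemma n2_split d r (U : 'M[R]_(d,r)) n (Z : 'M[R]_(d,n)) : U^T *m U = 1%:M ->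
  n2 Z = n2 (U^T *m Z) + n2 ((1%:M - U *m U^T) *m Z).
Proof.
move=> hU.
have -> : n2 (U^T *m Z) = n2 (U *m (U^T *m Z)) by rewrite (n2_orth _ hU).
have eZ : Z = U *m (U^T *m Z) + (1%:M - U *m U^T) *m Z.
  by rewrite mulmxBl mul1mx mulmxA addrC subrK.
rewrite {1}eZ n2D.
suff -> : ip (U *m (U^T *m Z)) ((1%:M - U *m U^T) *m Z) = 0.
  by rewrite mulr0 addr0.
rewrite /ip !trmx_mul !mulmxA trmxK -(mulmxA _ U^T) mulmxBr mulmx1.
rewrite !mulmxA hU mul1mx subrr mulmx0 mul0mx.
by rewrite /mxtrace big1 // => i _; rewrite mxE.
Qed.

Lemma n2_contr d r (U : 'M[R]_(d,r)) n (Z : 'M[R]_(d,n)) : U^T *m U = 1%:M ->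
  n2 (U^T *m Z) <= n2 Z.
Proof. move=> hU; rewrite (n2_split Z hU) lerDl; exact: n2_ge0. Qed.

Lemma frob_orth d r (U : 'M[R]_(d,r)) n (Z : 'M[R]_(r,n)) : U^T *m U = 1%:M -> frob (U *m Z) = frob Z.
Proof. by move=> hU; rewrite !frobE n2_orth. Qed.

Lemma frob_contr d r (U : 'M[R]_(d,r)) n (Z : 'M[R]_(d,n)) : U^T *m U = 1%:M ->
  frob (U^T *m Z) <= frob Z.
Proof. by move=> hU; apply: ler_wsqrtr; exact: n2_contr. Qed.

Lemma frob_diag_ge r (c : 'rV[R]_r) g n (W : 'M[R]_(r,n)) : 0 <= g ->
  (forall i, g <= c 0 i) -> g * frob W <= frob (diag_mx c *m W).
Proof.
move=> g0 hc; rewrite !frobE -(ger0_norm g0) -sqrtr_sqr -sqrtrM ?sqr_ge0 //.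
apply: ler_wsqrtr; rewrite /n2 mulr_sumr; apply: ler_sum => i _.
rewrite mulr_sumr; apply: ler_sum => j _; rewrite mul_diag_mx mxE exprMn.
apply: ler_wpM2r; first exact: sqr_ge0.
by rewrite ler_sqr ?nnegrE //; apply: le_trans (hc i).
Qed.

Lemma frob_diag_le r (c : 'rV[R]_r) g n (W : 'M[R]_(r,n)) : 0 <= g ->
  (forall i, `|c 0 i| <= g) -> frob (diag_mx c *m W) <= g * frob W.
Proof.
move=> g0 hc; rewrite !frobE -(ger0_norm g0) -sqrtr_sqr -sqrtrM ?sqr_ge0 //.
apply: ler_wsqrtr; rewrite /n2 mulr_sumr; apply: ler_sum => i _.
rewrite mulr_sumr; apply: ler_sum => j _; rewrite mul_diag_mx mxE exprMn.
apply: ler_wpM2r; first exact: sqr_ge0.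
rewrite -[c 0 i ^+ 2]ger0_norm ?sqr_ge0 // normrX ler_sqr ?nnegrE //; exact: hc.
Qed.

Definition dinv r (c : 'rV[R]_r) : 'rV[R]_r := \row_i (c 0 i)^-1.

Lemma diag_dinv r (c : 'rV[R]_r) : (forall i, c 0 i != 0) ->
  diag_mx c *m diag_mx (dinv c) = 1%:M /\ diag_mx (dinv c) *m diag_mx c = 1%:M.
Proof.
move=> hc; have e : diag_mx c *m diag_mx (dinv c) = 1%:M.
  rewrite mulmx_diag; apply/matrixP => i j; rewrite !mxE.
  by case: eqP => [->|_]; rewrite ?mulr1n ?mulr0n // mulfV.
by split => //; rewrite diag_mxC.
Qed.



Lemma beta_bound r (c : 'rV[R]_r) g (Hi : 'M[R]_r) t : 0 < g -> (forall i, g <= c 0 i) ->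
  frob (Hi *m diag_mx c - diag_mx c) <= t ->
  forall n (Z : 'M[R]_(r,n)), frob (Hi *m Z) <= (1 + t / g) * frob Z.
Proof.
move=> g0 hc ht n Z.
have cnz : forall i, c 0 i != 0 by move=> i; rewrite gt_eqF // (lt_le_trans g0).
have [e1 e2] := diag_dinv cnz.
have eZ : Hi *m Z = Z + (Hi *m diag_mx c - diag_mx c) *m (diag_mx (dinv c) *m Z).
  by rewrite mulmxBl !mulmxA -!(mulmxA _ _ (diag_mx (dinv c))) e1 mulmx1 mul1mx addrC subrK.
rewrite eZ; apply: le_trans (frobD _ _) _.
apply: le_trans (lerD (lexx _) (frobM _ _)) _.
have hD : frob (diag_mx (dinv c) *m Z) <= g^-1 * frob Z.
  apply: frob_diag_le; first by rewrite invr_ge0 ltW.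
  move=> i; rewrite mxE normfV ger0_norm ?(le_trans (ltW g0) (hc i)) // lef_pV2 ?posrE ?(lt_le_trans g0 (hc i)) //.
have f0 := frob_ge0 (Hi *m diag_mx c - diag_mx c).
have f1 := frob_ge0 (diag_mx (dinv c) *m Z).
have f2 := frob_ge0 Z.
have gi : 0 < g^-1 by rewrite invr_gt0.
rewrite mulrDl mul1r lerD2l mulrAC.
apply: le_trans (ler_wpM2l f0 hD) _.
set a := frob (Hi *m diag_mx c - diag_mx c).
have -> : t * frob Z / g = t * (g^-1 * frob Z) by ring.
by apply: ler_wpM2r => //; rewrite mulr_ge0 // ltW.
Qed.

Lemma lower_bound d r (U : 'M[R]_(d,r)) (c : 'rV[R]_r) g (H Hi : 'M[R]_r) beta
  (X DX : 'M[R]_(d,r)) :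
  U^T *m U = 1%:M -> 0 < g -> (forall i, g <= c 0 i) -> Hi *m H = 1%:M -> 0 < beta ->
  (forall n (Z : 'M[R]_(r,n)), frob (Hi *m Z) <= beta * frob Z) ->
  X = U *m diag_mx c *m H + DX ->
  forall n (W : 'M[R]_(r,n)), (g / beta - frob DX) * frob W <= frob (U^T *m X *m W).
Proof.
move=> hU g0 hc hH b0 hb -> n W.
have e : U^T *m (U *m diag_mx c *m H + DX) *m W = diag_mx c *m (H *m W) + U^T *m DX *m W.
  by rewrite mulmxDr mulmxDl !mulmxA hU mul1mx.
rewrite e; apply: le_trans _ (frob_rev _ _).
have h1 : g * frob (H *m W) <= frob (diag_mx c *m (H *m W)).
  by apply: frob_diag_ge => //; exact: ltW.
have h2 : frob W <= beta * frob (H *m W) by rewrite -{1}(mul1mx W) -hH -mulmxA hb.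
have h3 : frob (U^T *m DX *m W) <= frob DX * frob W.
  apply: le_trans (frobM _ _) _; apply: ler_wpM2r; first exact: frob_ge0.
  exact: frob_contr.
have h4 : g / beta * frob W <= g * frob (H *m W).
  rewrite mulrAC ler_pdivrMr // -mulrA; apply: ler_wpM2l; [exact: ltW|by rewrite mulrC].
rewrite mulrBl; lra.
Qed.


Lemma frob_eq0 p q (W : 'M[R]_(p,q)) : frob W = 0 -> W = 0.
Proof.
move=> /eqP; rewrite frobE sqrtr_eq0 => h.
have h0 : n2 W = 0 by apply/eqP; rewrite eq_le h n2_ge0.
apply/matrixP => i j; rewrite mxE.
have hi : \sum_(j < q) W i j ^+ 2 = 0.
  apply: (psumr_eq0P _ h0) => // k _; apply: sumr_ge0 => l _; exact: sqr_ge0.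
have : W i j ^+ 2 = 0.
  apply: (psumr_eq0P _ hi) => // k _; exact: sqr_ge0.
by move=> /eqP; rewrite sqrf_eq0 => /eqP.
Qed.

Lemma unit_of_lb r (P : 'M[R]_r) cc : 0 < cc ->
  (forall n (W : 'M[R]_(r,n)), cc * frob W <= frob (P *m W)) -> P \in unitmx.
Proof.
move=> c0 hP; rewrite -unitmx_tr -row_free_unit -kermx_eq0.
have hK : kermx P^T *m P^T = 0 by apply/sub_kermxP.
have e : P *m (kermx P^T)^T = 0 by rewrite -(trmxK P) -trmx_mul trmxK hK trmx0.
have := hP _ (kermx P^T)^T; rewrite e.
have -> : frob (0 : 'M[R]_(r,r)) = 0 by rewrite frobE /n2 big1 ?sqrtr0 // => i _; rewrite big1 // => j _; rewrite mxE expr0n.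
move=> h; have hf : frob (kermx P^T)^T = 0.
  apply/eqP; rewrite eq_le frob_ge0 andbT.
  by rewrite -(pmulr_rle0 _ c0).
by rewrite -trmx_eq0; apply/eqP; exact: frob_eq0.
Qed.


Lemma key d1 d2 r (U : 'M[R]_(d1,r)) (V : 'M[R]_(d2,r)) (cs : 'rV[R]_r)
  (X : 'M[R]_(d1,r)) (Y : 'M[R]_(r,d2)) cc :
  U^T *m U = 1%:M -> V^T *m V = 1%:M -> (forall i, cs 0 i != 0) -> 0 < cc ->
  (forall n (W : 'M[R]_(r,n)), cc * frob W <= frob (U^T *m X *m W)) ->
  (forall n (W : 'M[R]_(r,n)), cc * frob W <= frob (V^T *m Y^T *m W)) ->
  exists2 G, G \in unitmx &
    dist_val (U *m diag_mx cs) X (diag_mx cs *m V^T) Y G <=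
    frob (X *m Y - U *m diag_mx cs *m (diag_mx cs *m V^T)) / cc.
Proof.
move=> hU hV hcs c0 hP hQ.
set P := U^T *m X.
set Dc := diag_mx cs; set Di := diag_mx (dinv cs).
set E := X *m Y - U *m Dc *m (Dc *m V^T).
have [eDI eID] := diag_dinv hcs.
have Pu : P \in unitmx by apply: (unit_of_lb c0) => n W; rewrite /P hP.
set G := Di *m P.
have eGG : G *m (invmx P *m Dc) = 1%:M.
  by rewrite /G -mulmxA (mulmxA P) mulmxV // mul1mx.
have [Gu _] := mulmx1_unit eGG.
have eGi : invmx G = invmx P *m Dc.
  by rewrite -[invmx G]mulmx1 -eGG mulmxA mulVmx // mul1mx.
exists G => //.
rewrite /dist_val eGi.
have e1 : X - U *m Dc *m G = (1%:M - U *m U^T) *m X.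
  by rewrite /G mulmxBl mul1mx !mulmxA -(mulmxA U) eDI mulmx1.
have e2 : Y - invmx P *m Dc *m (Dc *m V^T) = invmx P *m (U^T *m E).
  by rewrite /E mulmxBr !mulmxA hU mul1mx -/P mulmxBr mulmxA mulVmx // mul1mx !mulmxA.
rewrite e1 e2.
set Xp := (1%:M - U *m U^T) *m X.
set Z := U^T *m E.
have b1 : cc * frob (invmx P *m Z) <= frob Z.
  by have := hP _ (invmx P *m Z); rewrite -/P (mulmxA P) (mulmxV Pu) mul1mx.
have eXp : Xp *m (Y *m V) = (1%:M - U *m U^T) *m E *m V.
  rewrite /E /Xp mulmxBr !mulmxBl !mulmxA !mul1mx -(mulmxA U U^T U) hU mulmx1 subrr.
  by rewrite subr0.
have b2 : cc * frob Xp <= frob ((1%:M - U *m U^T) *m E).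
  have := hQ _ Xp^T; rewrite frob_tr -!trmx_mul frob_tr eXp.
  move=> h; apply: le_trans h _.
  rewrite -frob_tr trmx_mul; apply: le_trans (frob_contr _ hV) _; by rewrite frob_tr.
have hsplit := n2_split E hU.
have g1 := frob_ge0 (invmx P *m Z); have g2 := frob_ge0 Xp.
have g3 := frob_ge0 Z; have g4 := frob_ge0 ((1%:M - U *m U^T) *m E).
apply: sqrt_le_of; first by rewrite divr_ge0 ?frob_ge0 // ltW.
rewrite expr_div_n (frob2 E).
have -> : n2 E = frob Z ^+ 2 + frob ((1%:M - U *m U^T) *m E) ^+ 2 by rewrite !frob2.
rewrite ler_pdivlMr ?exprn_gt0 //.
have b1' : (cc * frob (invmx P *m Z)) ^+ 2 <= frob Z ^+ 2.
  by rewrite ler_sqr ?nnegrE ?mulr_ge0 // ltW.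
have b2' : (cc * frob Xp) ^+ 2 <= frob ((1%:M - U *m U^T) *m E) ^+ 2.
  by rewrite ler_sqr ?nnegrE ?mulr_ge0 // ltW.
rewrite !exprMn in b1' b2'; lra.
Qed.

End Norms.

Section Arith.
Variable R : rcfType.

Lemma sqrt2_ge : (7/5 : R) <= Num.sqrt 2.
Proof.
have h : (0 : R) <= 7/5 by lra.
rewrite -(ger0_norm h) -sqrtr_sqr; apply: ler_wsqrtr; lra.
Qed.

Lemma arith1 (g nu w : R) : 0 < g -> 0 < nu -> nu <= 3/4 -> 7/5 <= w ->
  g / (2 * (1 + 2 * (1 + w) * nu)) <= g - nu * g.
Proof.
move=> g0 n0 n1 w1.
set k := 1 + 2 * (1 + w) * nu.
have k1 : 1 + 4 * nu <= k by rewrite /k; nra.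
have kp : 0 < 2 * k by lra.
rewrite ler_pdivrMr //.
have h : 1 <= (1 - nu) * (2 * k) by nra.
nra.
Qed.

Lemma arith2 (g nu w k e beta : R) : 0 < g -> 3/4 < nu -> 7/5 <= w ->
  k = 1 + 2 * (1 + w) * nu -> e = 3 / 2 * g / k -> beta = 1 + (nu * g + e) / g ->
  g / (2 * k) <= g / beta - e.
Proof.
move=> g0 n1 w1 ek ee eb0.
have k1 : 1 + 14 / 5 * nu <= k - 2 * nu by rewrite ek; nra.
have kp : 23 / 5 <= k by lra.
have k0 : 0 < k by lra.
have eb : beta = 1 + nu + 3 / (2 * k).
  rewrite eb0 ee; field; apply/andP; split; apply/eqP; lra.
have t0 : 0 < 3 / (2 * k) by rewrite divr_gt0 //; lra.
have bp : 0 < beta by rewrite eb; lra.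
have key : 2 * beta <= k.
  rewrite eb.
  have h3 : 3 / (2 * k) <= 3 / (2 * (23/5)) by rewrite ler_pdivrMr ?mulr_gt0 //; nra.
  lra.
rewrite -subr_ge0.
have -> : g / beta - e - g / (2 * k) = g * (k - 2 * beta) / (beta * k).
  rewrite ee; field; apply/andP; split; apply/eqP; lra.
apply: divr_ge0; first by apply: mulr_ge0; lra.
by apply: mulr_ge0; lra.
Qed.
End Arith.


Lemma last_entry_le (R : rcfType) r (s : 'rV[R]_r) : (0 < r)%N ->
  (forall i j : 'I_r, (i <= j)%N -> s 0 j <= s 0 i) ->
  exists j : 'I_r, last_entry s = s 0 j /\ forall i : 'I_r, last_entry s <= s 0 i.
Proof.
move=> r0 hm; have jr : (r.-1 < r)%N by rewrite ltn_predL.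
set j := Ordinal jr.
have ej : last_entry s = s 0 j.
  rewrite /last_entry (nth_map j) ?size_enum_ord //.
  by have := nth_ord_enum j j => /= ->.
exists j; split => // i; rewrite ej; apply: hm => /=.
by rewrite -ltnS prednK // ltn_ord.
Qed.

Lemma l1_diff (R : rcfType) m (I : {set 'I_m}) (v1 v2 : 'cV[R]_m) :
  (forall i, i \notin I -> v2 i 0 = 0) ->
  l1_on (~: I) (v1 - v2) - l1_on I (v1 - v2) <= l1 v1 - l1 v2.
Proof.
move=> h; rewrite /l1_on /l1 !(big_mkcond (fun i => i \in _)) /= -!sumrB.
apply: ler_sum => i _; rewrite in_setC !mxE.
case: (boolP (i \in I)) => hi /=.
  have := ler_normD (v1 i 0) (v2 i 0 - v1 i 0).
  rewrite addrCA subrr addr0 distrC; lra.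
by rewrite h // !subr0 normr0 subr0.
Qed.

Lemma rank_le (R : rcfType) d1 d2 r (X : 'M[R]_(d1,r)) (Y : 'M[R]_(r,d2)) (M : 'M[R]_(d1,d2)) :
  \rank M = r -> (\rank (X *m Y - M)%R <= 2 * r)%N.
Proof.
move=> hM.
have h1 : (\rank (X *m Y - M)%R <= \rank (X *m Y) + \rank (- M)%R)%N.
  apply: leq_trans (leq_of_leqif (mxrank_adds_leqif _ _)).
  by apply: mxrankS; apply: addmx_sub_adds; exact: submx_refl.
apply: leq_trans h1 _; rewrite mxrank_opp hM mul2n -addnn leq_add2r.
apply: leq_trans (mxrankM_maxl _ _) _; exact: rank_leq_col.
Qed.

Lemma frob_le_dist (R : rcfType) (a b : R) : 0 <= a -> a <= Num.sqrt (a ^+ 2 + b ^+ 2).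
Proof.
move=> a0; rewrite -{1}(ger0_norm a0) -sqrtr_sqr; apply: ler_wsqrtr.
by rewrite lerDl sqr_ge0.
Qed.

Lemma frob_rorth (R : rcfType) d r n (V : 'M[R]_(d,r)) (B : 'M[R]_(n,r)) :
  V^T *m V = 1%:M -> frob (B *m V^T) = frob B.
Proof. by move=> hV; rewrite -frob_tr trmx_mul trmxK frob_orth // frob_tr. Qed.

Theorem proposition4p7 (R : rcfType) (d1 d2 r m : nat)
  (M : 'M[R]_(d1, d2)) (U : 'M[R]_(d1, r)) (V : 'M[R]_(d2, r)) (s : 'rV[R]_r)
  (A : {linear 'M[R]_(d1, d2) -> 'cV[R]_m}) (b : 'cV[R]_m)
  (I : {set 'I_m}) (kappa3 nu : R) :
  (0 < r)%N ->
  \rank M = r ->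
  (* compact SVD M = U Lambda V^T *)
  U^T *m U = 1%:M ->
  V^T *m V = 1%:M ->
  (forall i : 'I_r, 0 < s 0 i) ->
  (forall i j : 'I_r, (i <= j)%N -> s 0 j <= s 0 i) ->
  M = U *m diag_mx s *m V^T ->
  0 < kappa3 ->
  (forall i : 'I_m, i \notin I -> b i 0 = A M i 0) ->
  (forall W : 'M[R]_(d1, d2), (\rank W <= 2 * r)%N ->
     kappa3 * frob W <= m%:R^-1 * l1_on (~: I) (A W) - m%:R^-1 * l1_on I (A W)) ->
  0 < nu ->
  let Xs := U *m diag_mx (map_mx Num.sqrt s) in
  let Ys := diag_mx (map_mx Num.sqrt s) *m V^T in
  let sigr := last_entry s in
  forall (X : 'M[R]_(d1, r)) (Y : 'M[R]_(r, d2)) (d : R),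
  is_dist Xs X Ys Y d ->
  Num.max (frob (X - Xs)) (frob (Y - Ys)) <= nu * Num.sqrt sigr ->
  d <= Num.sqrt sigr / (1 + 2 * (1 + Num.sqrt 2) * nu) ->
  lossf A b X Y - lossf A b Xs Ys >=
    kappa3 * Num.sqrt sigr / (2 + 4 * (1 + Num.sqrt 2) * nu) * d.
Proof.
move=> r0 rkM hU hV spos smono hM k0 hb hW n0 Xs Ys sigr X Y d [dlb dglb] hmax hd.
have [j [ej hsig]] := @last_entry_le _ _ s r0 smono.
rewrite -/sigr in ej hsig.
have sig0 : 0 < sigr by rewrite ej.
set g := Num.sqrt sigr.
have g0 : 0 < g by rewrite /g sqrtr_gt0.
rewrite -/g in hd.
set cs := map_mx Num.sqrt s.
have hcs : forall i, g <= cs 0 i by move=> i; rewrite mxE /g; apply: ler_wsqrtr.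
have hcs0 : forall i, cs 0 i != 0 by move=> i; rewrite gt_eqF // (lt_le_trans g0 (hcs i)).
set Dc := diag_mx cs.
have eXs : Xs = U *m Dc by [].
have eYs : Ys = Dc *m V^T by [].
have eM : M = U *m Dc *m (Dc *m V^T).
  rewrite hM !mulmxA /Dc -(mulmxA U (diag_mx cs)) mulmx_diag; congr (_ *m _ *m _); congr diag_mx.
  by apply/rowP => i; rewrite !mxE -expr2 sqr_sqrtr // ltW.
set E := X *m Y - M.
have hloss : kappa3 * frob E <= lossf A b X Y - lossf A b Xs Ys.
  have eXY : Xs *m Ys = M by rewrite eM eXs eYs.
  rewrite /lossf eXY -mulrBr.
  apply: le_trans (hW E (@rank_le _ _ _ _ X Y M rkM)) _.
  rewrite -mulrBr; apply: ler_wpM2l; first by rewrite invr_ge0 ler0n.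
  have -> : A E = (A (X *m Y) - b) - (A M - b) by rewrite /E linearB opprB addrA subrK.
  apply: (@l1_diff R m I) => i hi; rewrite !mxE hb // subrr //.
have w1 := sqrt2_ge R.
set w := Num.sqrt 2 in hd w1 *.
set k := 1 + 2 * (1 + w) * nu in hd *.
have kp : 0 < k by rewrite /k; nra.
set cc := g / (2 * k).
have cc0 : 0 < cc by rewrite /cc divr_gt0 //; lra.
move: hmax; rewrite ge_max -/g => /andP [hXs hYs].
have fin : forall (a t : R) p q (W : 'M[R]_(p,q)) F, cc <= a - t ->
    (a - t) * frob W <= F -> cc * frob W <= F.
  move=> a t p q W F h1 h2; apply: le_trans h2; apply: ler_wpM2r => //; exact: frob_ge0.
have hPQ : (forall n (W : 'M[R]_(r,n)), cc * frob W <= frob (U^T *m X *m W)) /\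
           (forall n (W : 'M[R]_(r,n)), cc * frob W <= frob (V^T *m Y^T *m W)).
  case: (lerP nu (3/4)) => hnu.
    have ca : cc <= g - nu * g by rewrite /cc /k; exact: arith1.
    have hb1 : forall n (Z : 'M[R]_(r,n)), frob (1%:M *m Z) <= 1 * frob Z.
      by move=> n Z; rewrite mul1mx mul1r.
    split => n W.
      have eX : X = U *m Dc *m 1%:M + (X - Xs) by rewrite mulmx1 eXs addrC subrK.
      apply: (fin g (frob (X - Xs))); first lra.
      have := lower_bound hU g0 hcs (mulmx1 1%:M) ltr01 hb1 eX W.
      by rewrite divr1.
    have eY : Y^T = V *m Dc *m 1%:M + (Y - Ys)^T.
      by rewrite mulmx1 linearB /= eYs trmx_mul trmxK /Dc tr_diag_mx addrC subrK.
    apply: (fin g (frob (Y - Ys))); first lra.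
    have := lower_bound hV g0 hcs (mulmx1 1%:M) ltr01 hb1 eY W.
    by rewrite divr1 frob_tr.
  set e := 3 / 2 * g / k.
  have dle : d < e.
    apply: le_lt_trans hd _; rewrite /e ltr_pM2r ?invr_gt0 //; lra.
  have [G0 [G0u hG0]] : exists G0, G0 \in unitmx /\ dist_val Xs X Ys Y G0 < e.
    apply: NNPP => hn.
    suff : e <= d by rewrite leNgt dle.
    apply: dglb => G Gu; rewrite leNgt; apply/negP => hlt; apply: hn; by exists G; split.
  set DX := X - Xs *m G0.
  set DY := Y - invmx G0 *m Ys.
  have fDX : frob DX <= e.
    apply: le_trans (ltW hG0); exact: frob_le_dist (frob_ge0 _).
  have fDY : frob DY <= e.
    apply: le_trans (ltW hG0); rewrite /dist_val addrC; exact: frob_le_dist (frob_ge0 _).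
  set t := nu * g + e.
  set beta := 1 + t / g.
  have e0 : 0 < e by rewrite /e; apply: divr_gt0 => //; lra.
  have bp : 0 < beta.
    rewrite /beta /t; have : 0 <= (nu * g + e) / g by apply: divr_ge0; nra. lra.
  have ab : cc <= g / beta - e by apply: (@arith2 R g nu w k e beta).
  split => n W.
    have hti : frob (invmx G0 *m Dc - Dc) <= t.
      rewrite -(@frob_rorth _ _ _ _ V _ hV).
      have -> : (invmx G0 *m Dc - Dc) *m V^T = (Y - Ys) - DY.
        by rewrite mulmxBl -mulmxA -eYs /DY opprB [RHS]addrC addrA subrK.
      apply: le_trans (frobB _ _) _; rewrite /t; lra.
    have bP := beta_bound g0 hcs hti.
    have eX : X = U *m Dc *m G0 + DX by rewrite /DX eXs addrC subrK.
    apply: (fin (g / beta) (frob DX)); first lra.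
    by have := lower_bound hU g0 hcs (mulVmx G0u) bp bP eX W.
  have hH : G0^T *m (invmx G0)^T = 1%:M by rewrite -trmx_mul mulVmx // trmx1.
  have hti : frob (G0^T *m Dc - Dc) <= t.
    have -> : G0^T *m Dc - Dc = (Dc *m G0 - Dc)^T.
      by rewrite linearB /= trmx_mul /Dc tr_diag_mx.
    rewrite frob_tr -(frob_orth _ hU).
    have -> : U *m (Dc *m G0 - Dc) = (X - Xs) - DX.
      by rewrite mulmxBr mulmxA -eXs /DX opprB [RHS]addrC addrA subrK.
    apply: le_trans (frobB _ _) _; rewrite /t; lra.
  have bQ := beta_bound g0 hcs hti.
  have eY : Y^T = V *m Dc *m (invmx G0)^T + DY^T.
    by rewrite /DY linearB /= trmx_mul eYs trmx_mul trmxK /Dc tr_diag_mx addrC subrK.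
  apply: (fin (g / beta) (frob DY)); first lra.
  by have := lower_bound hV g0 hcs hH bp bQ eY W; rewrite frob_tr.
case: hPQ => hP hQ.
have [G Gu hG] := key hU hV hcs0 cc0 hP hQ.
have hdE : d <= frob E / cc.
  apply: le_trans (dlb G Gu) _; by rewrite /E eM.
have -> : kappa3 * g / (2 + 4 * (1 + w) * nu) = kappa3 * cc.
  by rewrite /cc /k -mulrA; congr (_ * (_ / _)); ring.
apply: le_trans hloss; rewrite -mulrA; apply: ler_wpM2l; first exact: ltW.
by rewrite mulrC -ler_pdivlMr.
Qed.
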